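(* For every $U>0$, $\mu\in\mathbb{R}$, $T\ge0$, the functional $\mathcal{F}$ is bounded from below on $\mathcal{D}$.
   Context: Let $\mathbb{T}^3=[-\pi,\pi]^3$ with periodic identification and normalized Haar measure $dp$. Let $\varepsilon(p)=4\sum_{k=1}^3\sin^2(p_k/2)$. $\mathcal{D}=\{(\gamma,\alpha,\rho_0): \gamma\in L^1(\mathbb{T}^3),\ \gamma\ge0,\ \alpha^2\le\gamma(1+\gamma)\text{ a.e.},\ \rho_0\ge0\}$. With $\beta=\sqrt{(\tfrac12+\gamma)^2-\alpha^2}$, $S(\gamma,\alpha)=\int\big[(\beta+\tfrac12)\ln(\beta+\tfrac12)-(\beta-\tfrac12)\ln(\beta-\tfrac12)\big]dp$, and $\mathcal{F}(\gamma,\alpha,\rho_0)=\int(\varepsilon-\mu)\gamma\,dp-\mu\rho_0-TS(\gamma,\alpha)+\frac U2(\int\alpha)^2+U(\int\gamma)^2+U\rho_0\int\alpha+2U\rho_0\int\gamma+\frac U2\rho_0^2$ (integrals over $\mathbb{T}^3$). *)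

(* Defs.v *)
From HB Require Import structures.
From mathcomp Require Import all_boot all_order all_algebra.
From mathcomp Require Import all_classical all_reals all_analysis.
Unset Printing Implicit Defensive.
Import Order.TTheory GRing.Theory Num.Theory.
Import numFieldNormedType.Exports.
Local Open Scope classical_set_scope.
Local Open Scope ring_scope.

(* Points of the 3-torus are represented in the fundamental cube
   [-pi,pi]^3 inside R * R * R (= (R * R) * R). *)
Definition pt3 (R : realType) :=
  ((measurableTypeR R * measurableTypeR R) * measurableTypeR R)%type.

Definition leb3 (R : realType) :=
  (((@lebesgue_measure R) \x (@lebesgue_measure R)) \x (@lebesgue_measure R))%E.

Definition cube3 (R : realType) : set (pt3 R) :=
  [set p | (p.1.1 \in `[- pi, pi]) && (p.1.2 \in `[- pi, pi]) && (p.2 \in `[- pi, pi])].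

(* Integral against normalized Haar measure dp = dx / (2 pi)^3 on T^3. *)
Definition tint (R : realType) (f : pt3 R -> R) : R :=
  (2 * pi) ^- 3 * Rintegral (leb3 R) (cube3 R) f.

Definition disp (R : realType) (p : pt3 R) : R :=
  4 * (sin (p.1.1 / 2) ^+ 2 + sin (p.1.2 / 2) ^+ 2 + sin (p.2 / 2) ^+ 2).

Definition xlnx (R : realType) (x : R) : R := if x == 0 then 0 else x * ln x.

Definition betaf (R : realType) (g a : R) : R :=
  Num.sqrt ((2^-1 + g) ^+ 2 - a ^+ 2).

Definition sdens (R : realType) (b : R) : R :=
  xlnx R (b + 2^-1) - xlnx R (b - 2^-1).

Definition entropy (R : realType) (g a : pt3 R -> R) : R :=
  tint R (fun p => sdens R (betaf R (g p) (a p))).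

Definition inD (R : realType) (g a : pt3 R -> R) (rho0 : R) : Prop :=
  [/\ (leb3 R).-integrable (cube3 R) (fun p => (g p)%:E),
      measurable_fun (cube3 R) a,
      {ae leb3 R, forall p, cube3 R p -> 0 <= g p},
      {ae leb3 R, forall p, cube3 R p -> a p ^+ 2 <= g p * (1 + g p)}
    & 0 <= rho0].

Definition Ffun (R : realType) (U mu T : R) (g a : pt3 R -> R) (rho0 : R) : R :=
  tint R (fun p => (disp R p - mu) * g p) - mu * rho0 - T * entropy R g a
  + U / 2 * (tint R a) ^+ 2 + U * (tint R g) ^+ 2 + U * rho0 * tint R a
  + 2 * U * rho0 * tint R g + U / 2 * rho0 ^+ 2.

(* Main.v *)
Require Import Defs.
From HB Require Import structures.
From mathcomp Require Import all_boot all_order all_algebra.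
From mathcomp Require Import all_classical all_reals all_analysis.
From mathcomp Require Import ring lra measurable_realfun.
Import Order.TTheory GRing.Theory Num.Theory.
Import numFieldNormedType.Exports.
Local Open Scope classical_set_scope.
Local Open Scope ring_scope.

Section S.
Variable R : realType.
Let I : set (measurableTypeR R) := `[- pi, pi]%classic.

Lemma cube3E : cube3 R = (I `*` I) `*` I :> set (pt3 R).
Proof.
apply/seteqP; split => [[[x y] z]|[[x y] z]]; rewrite /cube3 /I /=.
  by move=> /andP[/andP[h1 h2] h3]; rewrite /= !inE.
by move=> [[/= h1 h2] h3]; apply/andP; split; [apply/andP; split|]; assumption.
Qed.

Lemma mI : measurable I. Proof. exact: measurable_itv. Qed.

Lemma mcube : measurable (cube3 R).
Proof. by rewrite cube3E; exact: (measurableX (measurableX mI mI) mI). Qed.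

Lemma fin_cube : (leb3 R (cube3 R) < +oo)%E.
Proof.
rewrite cube3E /leb3 (product_measure1E _ _ (measurableX mI mI) mI).
rewrite [X in (X * _)%E](_ : _ = lebesgue_measure I * lebesgue_measure I)%E; last exact: (product_measure1E _ _ mI mI).
rewrite /I lebesgue_measure_itv /=.
rewrite lebesgue_measure_itv /=; case: ifP => _; rewrite ?mul0e ?mule0 -?EFinD -?EFinM ?ltey //.
Qed.

Local Notation mu := (leb3 R).
Local Notation D := (cube3 R).

Lemma intcst (k : R) : mu.-integrable D (EFin \o (fun _ => k)).
Proof.
apply/integrableP; split; first exact: measurable_cst.
rewrite (eq_integral (cst `|k|%:E)) // integral_cst; last exact: mcube.
by apply: lte_mul_pinfty => //; exact: fin_cube.
Qed.

Lemma msinh : measurable_fun setT (fun x : measurableTypeR R => sin (x / 2)).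
Proof.
apply: (measurableT_comp (f := sin)); first exact: (measurable_realfun.continuous_measurable_fun (@continuous_sin R)).
exact: measurable_funM.
Qed.

Lemma mdisp : measurable_fun D (disp R).
Proof.
apply: (measurable_funS (E := setT)) => //.
rewrite /disp; apply: measurable_funM => //.
have m11 : measurable_fun setT (fun p : pt3 R => p.1.1).
  exact: measurableT_comp measurable_fst measurable_fst.
have m12 : measurable_fun setT (fun p : pt3 R => p.1.2).
  exact: measurableT_comp measurable_snd measurable_fst.
have m2 : measurable_fun setT (fun p : pt3 R => p.2) by exact: measurable_snd.
by repeat apply: measurable_funD; apply: measurable_funX;
  apply: (measurableT_comp msinh).
Qed.

Lemma mxlnx : measurable_fun setT (xlnx R).
Proof.
rewrite (_ : xlnx R = fun x => x * ln x); last first.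
  by apply/funext => x; rewrite /xlnx; case: eqP => [->|]; rewrite ?mul0r.
by apply: measurable_funM => //; exact: measurable_ln.
Qed.

Lemma msdens (g a : pt3 R -> R) : measurable_fun D g -> measurable_fun D a ->
  measurable_fun D (fun p => sdens R (betaf R (g p) (a p))).
Proof.
move=> mg ma.
have mb : measurable_fun D (fun p => betaf R (g p) (a p)).
  rewrite /betaf; apply: (@measurableT_comp _ _ _ _ _ _ (@Num.sqrt R) D (fun p => (2^-1 + g p) ^+ 2 - a p ^+ 2)).
    exact: (measurable_realfun.continuous_measurable_fun (@sqrt_continuous R)).
  apply: measurable_funB; apply: measurable_funX => //.
  exact: measurable_funD.
rewrite /sdens; apply: measurable_funB.
  by apply: (measurableT_comp mxlnx); exact: measurable_funD.
by apply: (measurableT_comp mxlnx); exact: measurable_funB.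
Qed.
Lemma xlnxE (x : R) : xlnx R x = x * ln x.
Proof. by rewrite /xlnx; case: eqP => [->|]; rewrite ?mul0r. Qed.

Lemma sdens_bound (x a : R) : 0 <= x -> a ^+ 2 <= x * (1 + x) ->
  0 <= sdens R (betaf R x a) <= x + 1.
Proof.
move=> x0 ha.
set b := betaf R x a.
have hq : 4^-1 <= (2^-1 + x) ^+ 2 - a ^+ 2.
  have -> : (4^-1 : R) = 2^-1 ^+ 2 by rewrite expr2 -invfM; congr (_^-1); lra.
  nra.
have hb0 : 0 <= b by rewrite /b /betaf sqrtr_ge0.
have hbsq : b ^+ 2 = (2^-1 + x) ^+ 2 - a ^+ 2.
  by rewrite /b /betaf sqr_sqrtr // (le_trans _ hq) // invr_ge0; lra.
have h2 : (2^-1 : R) * 2^-1 = 4^-1 by rewrite -invfM; congr (_^-1); lra.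
have hb1 : 2^-1 <= b by nra.
have hb2 : b <= 2^-1 + x by nra.
set y := b - 2^-1.
have y0 : 0 <= y by rewrite /y; lra.
have yx : y <= x by rewrite /y; lra.
rewrite /sdens !xlnxE -/y (_ : b + 2^-1 = 1 + y); last by rewrite /y; lra.
have [->|ypos] := eqVneq y 0.
  by rewrite addr0 ln1 !mulr0 mul0r subr0; lra.
have yp : 0 < y by rewrite lt_neqAle eq_sym ypos.
set L := ln (1 + y^-1).
have L0 : 0 <= L by apply: ln_ge0; rewrite lerDl invr_ge0.
have L1 : L <= y^-1.
  apply: le_ln1Dx; have : 0 <= y^-1 by rewrite invr_ge0 ltW.
  lra.
have yL : y * L <= 1 by rewrite -(divff ypos) ler_wpM2l // ltW.
have P0 : 0 <= ln (1 + y) by apply: ln_ge0; rewrite lerDl.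
have P1 : ln (1 + y) <= y by apply: le_ln1Dx; lra.
have E : ln (1 + y) = ln y + L.
  rewrite /L -lnM ?posrE //; last by rewrite ltr_wpDr // invr_ge0 ltW.
  by congr ln; rewrite mulrDr mulr1 divff // addrC.
have yL0 : 0 <= y * L by rewrite mulr_ge0 // ltW.
have -> : (1 + y) * ln (1 + y) - y * ln y = ln (1 + y) + y * L.
  by rewrite E; ring.
apply/andP; split; lra.
Qed.

Lemma quad_lb (U m x : R) : 0 < U -> - (m ^+ 2 / U) <= U * x ^+ 2 - m * x.
Proof.
move=> U0; rewrite -subr_ge0 opprK.
have -> : U * x ^+ 2 - m * x + m ^+ 2 / U = U^-1 * ((U * x) ^+ 2 - m * (U * x) + m ^+ 2).
  by field; rewrite gt_eqF.
apply: mulr_ge0; first by rewrite invr_ge0 ltW.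
nra.
Qed.

Lemma intZ (k : R) (f : pt3 R -> R) : mu.-integrable D (EFin \o f) ->
  mu.-integrable D (EFin \o (fun p => k * f p)).
Proof.
move=> fi; have := integrableZl mcube k fi.
by apply: (eq_integrable mcube) => p _; rewrite /= EFinM.
Qed.

Lemma intD (f h : pt3 R -> R) : mu.-integrable D (EFin \o f) ->
  mu.-integrable D (EFin \o h) ->
  mu.-integrable D (EFin \o (fun p => f p + h p)).
Proof.
move=> fi hi; have := integrableD mcube fi hi.
by apply: (eq_integrable mcube) => p _; rewrite /= EFinD.
Qed.

End S.

Theorem proposition3p1 (R : realType) (U mu T : R) (hU : 0 < U) (hT : 0 <= T) :
  exists C : R, forall (g a : pt3 R -> R) (rho0 : R),
    inD R g a rho0 -> C <= Ffun R U mu T g a rho0.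
Proof.
pose c : R := (2 * pi) ^- 3.
have c0 : 0 < c by rewrite /c invr_gt0 exprn_gt0 // mulr_gt0 // pi_gt0.
pose K := Rintegral (leb3 R) (cube3 R) (fun _ => 1).
pose k := c * K.
exists (- ((mu + T) ^+ 2 / U) - ((mu + U * k) ^+ 2 / (U / 2)) - T * k).
move=> g a rho0 [gi ma aeg aea r0].
have mD := mcube R.
have mg : measurable_fun (cube3 R) g by apply/measurable_EFinP; exact: measurable_int gi.
have [N [mN N0 HN]] := negligibleU aeg aea.
pose D' := cube3 R `\` N.
have mD' : measurable D' by exact: measurableD.
have hp : forall p, D' p -> 0 <= g p /\ a p ^+ 2 <= g p * (1 + g p).
  move=> p [Dp Np]; split.
    by apply: contrapT => H; apply: Np; apply: HN; left => /(_ Dp).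
  by apply: contrapT => H; apply: Np; apply: HN; right => /(_ Dp).
have D'D : D' `<=` cube3 R by move=> p [].
have toD' : forall f : pt3 R -> R, (leb3 R).-integrable (cube3 R) (EFin \o f) ->
    Rintegral (leb3 R) (cube3 R) f = Rintegral (leb3 R) D' f.
  by move=> f fi; rewrite /Rintegral (negligible_integral mN mD fi N0).
have onD' : forall f : pt3 R -> R, (leb3 R).-integrable (cube3 R) (EFin \o f) ->
    (leb3 R).-integrable D' (EFin \o f).
  by move=> f fi; apply: (integrableS mD mD' D'D fi).
have fromD' : forall f : pt3 R -> R, measurable_fun (cube3 R) f ->
    (leb3 R).-integrable D' (EFin \o f) -> (leb3 R).-integrable (cube3 R) (EFin \o f).
  move=> f mf fi; apply/(negligible_integrable mN mD _ N0) => //.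
  exact/measurable_EFinP.
have gi' : (leb3 R).-integrable (cube3 R) (EFin \o g) by [].
have i1 := intcst R 1.
have g1i := @intD R g (fun _ => 1) gi' i1.
pose G := Rintegral (leb3 R) (cube3 R) g.
pose H := Rintegral (leb3 R) (cube3 R) (fun p => g p + 1).
have HGK : H = G + K by rewrite /H RintegralD.
have G0 : 0 <= G.
  by rewrite /G toD' //; apply: Rintegral_ge0 => p /hp [].
have K0 : 0 <= K by apply: Rintegral_ge0.
pose s := fun p => sdens R (betaf R (g p) (a p)).
have ms : measurable_fun (cube3 R) s by exact: (@msdens R g a mg ma).
have sb : forall p, D' p -> 0 <= s p <= g p + 1.
  by move=> p /hp [h1 h2]; exact: (@sdens_bound R).
have si : (leb3 R).-integrable (cube3 R) (EFin \o s).
  apply: fromD' => //; apply: (le_integrable mD' _ _ (onD' _ g1i)).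
    by apply/measurable_EFinP; exact: measurable_funS ms.
  move=> p Dp; rewrite /comp !abse_EFin lee_fin.
  have /andP[h1 h2] := sb p Dp; rewrite !ger0_norm //.
  by have [h3 _] := hp p Dp; lra.
have SH : Rintegral (leb3 R) (cube3 R) s <= H.
  rewrite toD' // /H toD' //; apply: le_Rintegral => //; try exact: onD'.
  by move=> p /sb /andP[].
have ab : forall p, D' p -> `|a p| <= g p + 1.
  move=> p /hp [h1 h2]; have [a0|a0] := lerP 0 (a p).
    by rewrite ger0_norm //; nra.
  by rewrite ltr0_norm //; nra.
have ai : (leb3 R).-integrable (cube3 R) (EFin \o a).
  apply: fromD' => //; apply: (le_integrable mD' _ _ (onD' _ g1i)).
    by apply/measurable_EFinP; exact: measurable_funS ma.
  move=> p Dp; rewrite /comp !abse_EFin lee_fin.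
  have [h3 _] := hp p Dp; rewrite (ger0_norm (_ : 0 <= g p + 1)); last by lra.
  exact: ab.
have aH : `|Rintegral (leb3 R) (cube3 R) a| <= H.
  rewrite toD' // /H toD' //.
  apply: le_trans (le_normr_Rintegral mD' (onD' _ ai)) _.
  apply: le_Rintegral => //; last (try (move=> p Dp; exact: ab)).
  - apply: (le_integrable mD' _ _ (onD' _ ai)).
      apply/measurable_EFinP; apply: measurableT_comp => //.
      exact: measurable_funS ma.
    by move=> p _; rewrite /comp !abse_EFin normr_id.
  - exact: onD'.
pose f1 := fun p => (disp R p - mu) * g p.
have dispb : forall p, 0 <= disp R p <= 12.
  move=> p; rewrite /disp.
  have hs : forall x : R, 0 <= sin x ^+ 2 <= 1.
    move=> x; have := sin_le1 x; have := sin_geN1 x; move=> h1 h2.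
    by apply/andP; split; [exact: sqr_ge0| nra].
  have := hs (p.1.1 / 2); have := hs (p.1.2 / 2); have := hs (p.2 / 2).
  move=> /andP[? ?] /andP[? ?] /andP[? ?]; apply/andP; split; lra.
have f1i : (leb3 R).-integrable (cube3 R) (EFin \o f1).
  apply: (le_integrable mD _ _ (@intZ R (12 + `|mu|) g gi')).
    apply/measurable_EFinP; apply: measurable_funM => //.
    by apply: measurable_funB => //; exact: (@mdisp R).
  move=> p _; rewrite /comp !abse_EFin lee_fin /f1 !normrM.
  apply: ler_wpM2r => //.
  have /andP[h1 h2] := dispb p.
  rewrite (ger0_norm (_ : 0 <= 12 + `|mu|)); last by have := normr_ge0 mu; lra.
  apply: le_trans (ler_normB _ _) _; rewrite ger0_norm //; lra.
have f1G : - mu * G <= Rintegral (leb3 R) (cube3 R) f1.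
  have e1 : Rintegral (leb3 R) (cube3 R) (fun p => - mu * g p) = - mu * G.
    exact: RintegralZl.
  rewrite -e1 (toD' _ (@intZ R (- mu) g gi')) (toD' _ f1i).
  apply: le_Rintegral => //; last first.
    move=> p /hp [h1 _]; rewrite /f1; have /andP[d1 _] := dispb p; nra.
  all: try exact: onD'.
  exact/onD'/(@intZ R (- mu) g gi').
rewrite /Ffun /entropy /tint -/c -/f1 -/s.
rewrite -[X in X <= _]/(- ((mu + T) ^+ 2 / U) - ((mu + U * k) ^+ 2 / (U / 2)) - T * k).
set x := c * G.
set b := c * Rintegral (leb3 R) (cube3 R) a.
have x0 : 0 <= x by rewrite mulr_ge0 // ltW.
have k0 : 0 <= k by rewrite mulr_ge0 // ltW.
have hb : `|b| <= x + k.
  by rewrite /b normrM gtr0_norm // /x /k -mulrDr -HGK ler_wpM2l // ltW.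
have hS : c * Rintegral (leb3 R) (cube3 R) s <= x + k.
  by rewrite /x /k -mulrDr -HGK ler_wpM2l // ltW.
have hA : - mu * x <= c * Rintegral (leb3 R) (cube3 R) f1.
  by rewrite /x mulrCA ler_wpM2l // ltW.
have q1 := @quad_lb R U (mu + T) x hU.
have q2 : - ((mu + U * k) ^+ 2 / (U / 2)) <= (U / 2) * rho0 ^+ 2 - (mu + U * k) * rho0.
  by apply: (@quad_lb R); lra.
have hb2 : - (x + k) <= b by move/ler_normlP: (hb) => [h1 h2]; lra.
have t1 : - (U * rho0 * (x + k)) <= U * rho0 * b.
  rewrite -mulrN; apply: ler_wpM2l; [rewrite mulr_ge0 // ltW //|lra].
have t2 : 0 <= U / 2 * b ^+ 2 by rewrite mulr_ge0 ?sqr_ge0 // divr_ge0 // ltW.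
have t3 : 0 <= U * rho0 * x by rewrite !mulr_ge0 // ltW.
have t4 : T * (c * Rintegral (leb3 R) (cube3 R) s) <= T * (x + k) by exact: ler_wpM2l.
rewrite -/x -/b.
nra.
Qed.
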